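(* For an arbitrary fixed order, if $OPT(I)=1$ then $FF(I)=1$, and if $OPT(I)=2$ then $FF(I)\le 3$. Hence first-fit is a $3/2$-approximation on instances with $OPT(I)\le 2$.
   Context: Fixed order scheduling with deadlines: there are jobs $J=\{1,\dots,n\}$, each job $j$ having a processing time $p_j\in\mathbb{N}$, $p_j>0$, and a deadline $d_j\in\mathbb{N}$ with $d_j\ge p_j$ (no other assumption relating order, deadlines, or processing times). All jobs are released at time $0$; job $j$ precedes job $k$ in the fixed order iff $j<k$. A schedule $\tau:J\to\{1,\dots,n\}$ assigns jobs to identical machines; each machine processes its jobs in the fixed order from time $0$ without idle time or preemption, so job $j$ completes at $\sum_{k\le j,\tau(k)=\tau(j)}p_k$; it is feasible if every job completes by its deadline. $OPT(I)$ is the minimum number of machines used by a feasible schedule. First-fit (FF): machines indexed $1,2,\dots$; process jobs in the fixed order and assign each job $j$ to the smallest-index machine whose current load (sum of processing times already assigned) plus $p_j$ is at most $d_j$; $FF(I)$ is the number of nonempty machines. *)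

(* Defs.v *)
From mathcomp Require Import all_boot.
Set Implicit Arguments. Unset Strict Implicit. Unset Printing Implicit Defensive.

(* A job is a pair (p, d): processing time p and deadline d.
   An instance is the sequence of jobs in the fixed order
   (job at position 0 is job 1, etc.). *)
Definition job := (nat * nat)%type.
Definition ptime (j : job) : nat := j.1.
Definition dline (j : job) : nat := j.2.

Definition valid_instance (I : seq job) : bool :=
  all (fun j => (0 < ptime j) && (ptime j <= dline j)) I.

Definition jobt (I : seq job) := 'I_(size I).
Definition jb (I : seq job) (k : nat) : job := nth (0, 0) I k.

Definition schedule (I : seq job) := 'I_(size I) -> 'I_(size I).

Definition completion (I : seq job) (tau : schedule I) (j : 'I_(size I)) : nat :=
  \sum_(k < size I | (k <= j) && (tau k == tau j)) ptime (jb I k).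

Definition feasible (I : seq job) (tau : schedule I) : Prop :=
  forall j : 'I_(size I), completion tau j <= dline (jb I j).

Definition machines_used (I : seq job) (tau : schedule I) : nat :=
  #|[set tau j | j : 'I_(size I)]|.

Definition is_OPT (I : seq job) (k : nat) : Prop :=
  (exists tau : schedule I, feasible tau /\ machines_used tau = k) /\
  (forall tau : schedule I, feasible tau -> k <= machines_used tau).

(* First-fit: machine loads as a sequence (machine i has load nth 0 loads i).
   A job goes to the smallest-index machine whose load + p <= d; if none of
   the currently nonempty machines fits, it opens a new machine (an empty
   machine always fits since p <= d). *)
Definition ff_step (loads : seq nat) (j : job) : seq nat :=
  let i := find (fun l => l + ptime j <= dline j) loads in
  if i < size loads then set_nth 0 loads i (nth 0 loads i + ptime j)
  else rcons loads (ptime j).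

Definition FF (I : seq job) : nat := size (foldl ff_step [::] I).

(* Main.v *)
Require Import Defs.
From mathcomp Require Import all_boot zify.
Set Implicit Arguments. Unset Strict Implicit.

Lemma ff_step_spec F j i0 : nth 0 F i0 + ptime j <= dline j ->
  let i := find (fun l => l + ptime j <= dline j) F in
  i <= i0 /\ size (ff_step F j) = maxn (size F) i.+1 /\
  (forall k, nth 0 (ff_step F j) k = nth 0 F k + (if k == i then ptime j else 0)) /\
  (forall k, k < i -> dline j < nth 0 F k + ptime j).
Proof.
move=> Hfit i.
have Hi : i <= i0.
  rewrite leqNgt; apply/negP => lt.
  by have := before_find 0 lt; rewrite Hfit.
have Hrej : forall k, k < i -> dline j < nth 0 F k + ptime j.
  by move=> k /(before_find 0) /= /negbT; rewrite -ltnNge.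
have Hsz : i <= size F by apply: find_size.
split=> //; rewrite /ff_step -/i; case: ifP => hi.
  split; first by rewrite size_set_nth maxnC.
  split=> // k; rewrite nth_set_nth /=; case: eqP => [->|_]; by rewrite ?addn0.
have ei : i = size F by lia.
split; first by rewrite size_rcons ei; lia.
split=> // k; rewrite nth_rcons -ei.
case: ltnP => hk.
  by rewrite (_ : (k == i) = false) ?addn0 //; apply/negbTE/eqP; lia.
case: eqP => [->|ne]; first by rewrite nth_default ?ei.
by rewrite nth_default //; lia.
Qed.

Lemma sum_step n k (P : 'I_n -> bool) (G : 'I_n -> nat) (K : 'I_n) : val K = k ->
  \sum_(i < n | (i < k.+1) && P i) G i =
  \sum_(i < n | (i < k) && P i) G i + (if P K then G K else 0).
Proof.
move=> eK.
have E : forall i : 'I_n, (i == K) = (val i == k) by move=> i; rewrite -eK.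
case: ifP => PK.
  rewrite (bigD1 K) /=; last by rewrite PK eK ltnS leqnn.
  rewrite addnC; congr (_ + _); apply: eq_bigl => i.
  rewrite E ltnS; case: (ltngtP (val i) k) => h //=; rewrite ?andbT ?andbF //=.
rewrite addn0; apply: eq_bigl => i.
rewrite ltnS; case: (ltngtP (val i) k) => h //=.
have -> : i = K by apply: val_inj; rewrite h eK.
by [].
Qed.

Definition ldm (I : seq job) (tau : schedule I) k (m : 'I_(size I)) :=
  \sum_(i < size I | (i < k) && (tau i == m)) ptime (jb I i).

Lemma ldm_step I (tau : schedule I) k (K : 'I_(size I)) m : val K = k ->
  ldm tau k.+1 m = ldm tau k m + (if tau K == m then ptime (jb I K) else 0).
Proof. by move=> eK; rewrite /ldm (sum_step _ _ eK). Qed.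

Lemma ldm0 I (tau : schedule I) m : ldm tau 0 m = 0.
Proof. by rewrite /ldm big1 // => i; rewrite ltn0. Qed.

Lemma compl_eq I (tau : schedule I) K :
  completion tau K = ldm tau K (tau K) + ptime (jb I K).
Proof.
rewrite /completion /ldm.
have := sum_step (fun i => tau i == tau K) (fun i => ptime (jb I i)) (erefl (val K)).
by rewrite eqxx.
Qed.

Lemma arith (L0 L1 L2 N0 N1 N2 A B p d i : nat) :
  N0 = L0 + (if 0 == i then p else 0) -> N1 = L1 + (if 1 == i then p else 0) ->
  N2 = L2 + (if 2 == i then p else 0) ->
  L0 + L1 + L2 = A + B -> (L1 <= A \/ L2 <= A) -> (L1 <= B \/ L2 <= B) ->
  A + p <= d -> i <= 2 -> (0 < i -> d < L0 + p) -> (1 < i -> d < L1 + p) ->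
  N0 + N1 + N2 = A + p + B /\ (N1 <= A + p \/ N2 <= A + p) /\ (N1 <= B \/ N2 <= B).
Proof. move=> -> -> ->; case: i => [|[|[|i]]] //= *; lia. Qed.

Lemma inv2 I (tau : schedule I) m1 m2 : feasible tau ->
  (forall j, tau j = m1 \/ tau j = m2) -> m1 != m2 ->
  forall k, k <= size I -> let F := foldl ff_step [::] (take k I) in
  size F <= 3 /\ nth 0 F 0 + nth 0 F 1 + nth 0 F 2 = ldm tau k m1 + ldm tau k m2 /\
  (nth 0 F 1 <= ldm tau k m1 \/ nth 0 F 2 <= ldm tau k m1) /\
  (nth 0 F 1 <= ldm tau k m2 \/ nth 0 F 2 <= ldm tau k m2).
Proof.
move=> feas two neq; elim=> [|k IH] hk F.
  by rewrite /F take0 /= !ldm0; split=> //; split=> //; split; left.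
have hk' : k < size I by [].
pose K := Ordinal hk'.
have {IH} [sz [sm [h1 h2]]] := IH (ltnW hk).
rewrite {}/F (take_nth (0,0) hk') foldl_rcons.
change (nth (0,0) I k) with (jb I K).
have fe : ldm tau k (tau K) + ptime (jb I K) <= dline (jb I K).
  by have := feas K; rewrite compl_eq.
have e1 : ldm tau k.+1 m1 = _ := ldm_step tau m1 (erefl k : val K = k).
have e2 : ldm tau k.+1 m2 = _ := ldm_step tau m2 (erefl k : val K = k).
have ne21 : (m2 == m1) = false by apply/negbTE; rewrite eq_sym.
have ne12 : (m1 == m2) = false by apply/negbTE.
have [i0 [i0le fit]] : exists i0, i0 <= 2 /\ nth 0 (foldl ff_step [::] (take k I)) i0 + ptime (jb I K) <= dline (jb I K).
  case: (two K) => eK; rewrite eK in fe.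
    by case: h1 => h; [exists 1 | exists 2]; split => //; lia.
  by case: h2 => h; [exists 1 | exists 2]; split => //; lia.
have [ile [esz [enth erej]]] := ff_step_spec fit.
rewrite esz.
set i := find _ _ in ile esz enth erej.
have iub : i <= 2 by lia.
split; first by lia.
case: (two K) => eK; rewrite eK in fe e1 e2; rewrite eqxx ?ne12 ?ne21 addn0 in e1 e2;
  rewrite e1 e2.
  have := arith (enth 0) (enth 1) (enth 2) sm h1 h2 fe iub
    (fun h => erej 0 h) (fun h => erej 1 h).
  by move=> [s [a b]]; split; [exact: s | split].
have := arith (enth 0) (enth 1) (enth 2) (etrans sm (addnC _ _)) h2 h1 fe iub
    (fun h => erej 0 h) (fun h => erej 1 h).
by move=> [s [a b]]; split; [rewrite s addnC | split].
Qed.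

Lemma inv1 I (tau : schedule I) m : feasible tau -> (forall j, tau j = m) ->
  forall k, k <= size I -> let F := foldl ff_step [::] (take k I) in
  size F <= 1 /\ (0 < k -> 0 < size F) /\ nth 0 F 0 = ldm tau k m.
Proof.
move=> feas one; elim=> [|k IH] hk F.
  by rewrite /F take0 /= ldm0.
have hk' : k < size I by [].
pose K := Ordinal hk'.
have {IH} [sz [_ h0]] := IH (ltnW hk).
rewrite {}/F (take_nth (0,0) hk') foldl_rcons.
change (nth (0,0) I k) with (jb I K).
have fe : ldm tau k (tau K) + ptime (jb I K) <= dline (jb I K).
  by have := feas K; rewrite compl_eq.
rewrite one in fe.
have e1 : ldm tau k.+1 m = _ := ldm_step tau m (erefl k : val K = k).
rewrite one eqxx in e1.
have fit : nth 0 (foldl ff_step [::] (take k I)) 0 + ptime (jb I K) <= dline (jb I K)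
  by rewrite h0.
have [ile [esz [enth _]]] := ff_step_spec fit.
set i := find _ _ in ile esz enth.
have ei : i = 0 by lia.
rewrite ei in esz enth.
rewrite esz enth e1 h0.
by rewrite eqxx; split; [lia | split => //; lia].
Qed.

Theorem mainTheorem8 (I : seq job) :
  valid_instance I ->
  (is_OPT I 1 -> FF I = 1) /\
  (is_OPT I 2 -> FF I <= 3) /\
  (forall k, k <= 2 -> is_OPT I k -> 2 * FF I <= 3 * k).
Proof.
move=> _.
have P1 : is_OPT I 1 -> FF I = 1.
  case=> [[tau [feas mu]] _].
  move/eqP: mu => /cards1P [m hm].
  have one : forall j, tau j = m.
    by move=> j; apply/set1P; rewrite -hm imset_f.
  have n0 : 0 < size I by apply: leq_ltn_trans (ltn_ord m).
  have := inv1 feas one (leqnn (size I)); rewrite take_size /FF.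
  by move=> [a [b _]]; have := b n0; lia.
have P2 : is_OPT I 2 -> FF I <= 3.
  case=> [[tau [feas mu]] _].
  move/eqP: mu => /cards2P [m1 [m2 [neq hm]]].
  have two : forall j, tau j = m1 \/ tau j = m2.
    by move=> j; apply/set2P; rewrite -hm imset_f.
  have := inv2 feas two neq (leqnn (size I)); rewrite take_size /FF.
  by case.
split=> //; split=> //.
move=> k; case: k => [|[|[|k]]] // _ H.
- case: H => [[tau [_ mu]] _].
  clear P1 P2; case: I tau mu => [|x I] tau mu; first by [].
  have hin : tau ord0 \in [set tau j | j : 'I_(size (x :: I))].
    by apply/imsetP; exists ord0.
  move: mu; rewrite /machines_used => /eqP; rewrite cards_eq0 => /eqP E.
  by rewrite E in_set0 in hin.
- by rewrite (P1 H).
- by have := P2 H; lia.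
Qed.
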